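(* Let $\mathcal F$ be a convex cone of numerical functions on a set $Y$ and let $f_0\in\mathcal F$ with $0<f_0<\infty$. For every numerical function $\varphi\ge0$ on $Y$ let $F_\varphi:=\inf\{f\in\mathcal F: f\ge\varphi\}$. Then $F_{\varphi 1_{Y\setminus A}}=F_\varphi$ for every numerical function $\varphi\ge0$ on $Y$ and every $A\subset Y$ such that $\alpha\varphi\le F_\varphi\wedge(Mf_0)$ on $A$ for some $\alpha,M\in(1,\infty)$. *)

(* Defs.v *)
(* classical reals, extended by +oo and -oo ("numerical" values). *)
From Stdlib Require Import Reals ClassicalEpsilon.
Open Scope R_scope.

Inductive ER : Type := Fin (r : R) | PInf | NInf.

Definition Ele (x y : ER) : Prop :=
  match x, y with
  | NInf, _ => True
  | _, PInf => True
  | PInf, _ => False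
  | _, NInf => False
  | Fin a, Fin b => a <= b
  end.

Definition Emin (x y : ER) : ER :=
  match x, y with
  | NInf, _ => NInf
  | _, NInf => NInf
  | PInf, _ => y
  | _, PInf => x
  | Fin a, Fin b => Fin (Rmin a b)
  end.

(* addition; the value on the undefined pairs (+oo,-oo) is irrelevant since
   the cone axiom below only requires closure when sums are defined *)
Definition Eplus (x y : ER) : ER :=
  match x, y with
  | Fin a, Fin b => Fin (a + b)
  | PInf, _ => PInf
  | _, PInf => PInf
  | NInf, _ => NInf
  | _, NInf => NInf
  end.

Definition Eundef_sum (x y : ER) : Prop :=
  (x = PInf /\ y = NInf) \/ (x = NInf /\ y = PInf).

(* multiplication by a real scalar (convention 0 * (+-oo) = 0) *)
Definition Escal (a : R) (x : ER) : ER :=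
  match x with
  | Fin r => Fin (a * r)
  | PInf => if Rlt_dec 0 a then PInf else if Rlt_dec a 0 then NInf else Fin 0
  | NInf => if Rlt_dec 0 a then NInf else if Rlt_dec a 0 then PInf else Fin 0
  end.

(* greatest lower bound of a set of extended reals (it always exists) *)
Definition is_Einf (S : ER -> Prop) (m : ER) : Prop :=
  (forall x, S x -> Ele m x) /\
  (forall m', (forall x, S x -> Ele m' x) -> Ele m' m).

Definition Einf (S : ER -> Prop) : ER :=
  epsilon (inhabits PInf) (is_Einf S).

Definition convex_cone {Y : Type} (F : (Y -> ER) -> Prop) : Prop :=
  (forall f g, F f -> F g -> (forall y, ~ Eundef_sum (f y) (g y)) ->
     F (fun y => Eplus (f y) (g y))) /\
  (forall (a : R) f, 0 < a -> F f -> F (fun y => Escal a (f y))).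

Definition red {Y : Type} (F : (Y -> ER) -> Prop) (phi : Y -> ER) : Y -> ER :=
  fun y => Einf (fun v => exists f, F f /\ (forall z, Ele (phi z) (f z)) /\ v = f y).

Definition restr_compl {Y : Type} (phi : Y -> ER) (A : Y -> Prop) : Y -> ER :=
  fun y => if excluded_middle_informative (A y) then Fin 0 else phi y.

(* Main.v *)
Require Import Defs.
From Stdlib Require Import Reals Lra Classical ClassicalEpsilon.
Open Scope R_scope.

Lemma Ele_trans x y z : Ele x y -> Ele y z -> Ele x z.
Proof. destruct x, y, z; simpl; intros; auto; try lra; contradiction. Qed.

Lemma Ele_antisym x y : Ele x y -> Ele y x -> x = y.
Proof. destruct x, y; simpl; intros; try contradiction; auto.
  f_equal; lra. Qed.

Lemma Ele_Emin x a b : Ele x (Emin a b) -> Ele x a /\ Ele x b.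
Proof. destruct x, a, b; simpl; intros; try contradiction; auto;
  try (split; auto; try apply Rmin_glb_lt; try lra);
  try (pose proof (Rmin_l r0 r1); pose proof (Rmin_r r0 r1); lra). Qed.

Lemma is_Einf_mem S m : S m -> (forall x, S x -> Ele m x) -> is_Einf S m.
Proof. intros Hm Hl; split; auto. Qed.

Lemma Einf_exists S : exists m, is_Einf S m.
Proof.
  destruct (classic (S NInf)) as [HN|HN].
  { exists NInf; apply is_Einf_mem; simpl; auto. }
  destruct (classic (exists r, S (Fin r))) as [[r0 Hr0]|HF].
  - destruct (classic (exists b, forall r, S (Fin r) -> b <= r)) as [[b Hb]|Hub].
    + assert (Hbd : bound (fun x => S (Fin (-x)))).
      { exists (-b). intros x Hx. specialize (Hb _ Hx). lra. }
      assert (Hne : exists x, S (Fin (-x))).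
      { exists (-r0). rewrite Ropp_involutive. auto. }
      destruct (completeness _ Hbd Hne) as [l [Hl1 Hl2]].
      exists (Fin (-l)). split.
      * intros x Hx. destruct x; simpl; auto.
        assert (H' : (fun x => S (Fin (-x))) (-r)) by (simpl; rewrite Ropp_involutive; auto).
        specialize (Hl1 _ H'). lra.

      * intros m' Hm'. destruct m'; simpl; auto.
        -- assert (l <= -r). { apply Hl2. intros x Hx. specialize (Hm' _ Hx). simpl in Hm'. lra. }
           lra.
        -- specialize (Hm' _ Hr0). simpl in Hm'. auto.
    + exists NInf. split; [intros; simpl; auto|].
      intros m' Hm'. destruct m'; simpl; auto.
      * apply Hub. exists r. intros r1 H1. apply (Hm' _ H1).
      * apply (Hm' _ Hr0).
  - exists PInf. split.
    + intros x Hx. destruct x; simpl; auto. apply HF; eauto.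
    + intros m' _. destruct m'; simpl; auto.
Qed.

Lemma Einf_spec S : is_Einf S (Einf S).
Proof. unfold Einf. apply epsilon_spec. apply Einf_exists. Qed.

Section Main.
Variables (Y : Type) (F : (Y -> ER) -> Prop) (f0 : Y -> ER) (phi : Y -> ER) (A : Y -> Prop).
Hypothesis Hcone : convex_cone F.
Hypothesis Hf0 : F f0.
Hypothesis Hf0pos : forall y, exists r, 0 < r /\ f0 y = Fin r.
Hypothesis Hphi : forall y, Ele (Fin 0) (phi y).
Variables alpha M : R.
Hypothesis Ha : 1 < alpha.
Hypothesis HM : 1 < M.
Hypothesis HA : forall y, A y ->
       Ele (Escal alpha (phi y)) (Emin (red F phi y) (Escal M (f0 y))).

Variable g : Y -> ER.
Hypothesis Fg : F g.
Hypothesis Hg : forall z, Ele (restr_compl phi A z) (g z).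

Lemma g_nonneg z : Ele (Fin 0) (g z).
Proof. eapply Ele_trans; [|apply Hg]. unfold restr_compl.
  destruct excluded_middle_informative; [simpl; lra | apply Hphi]. Qed.

Definition h (t : R) := fun z => Eplus (g z) (Escal t (f0 z)).

Lemma red_le t : 0 < t -> (forall z, Ele (phi z) (h t z)) ->
  forall z, Ele (red F phi z) (h t z).
Proof.
  intros Ht Hc z. destruct (Einf_spec (fun v => exists f, F f /\ (forall z, Ele (phi z) (f z)) /\ v = f z)) as [H1 _].
  apply H1. exists (h t). split; auto.
  destruct Hcone as [Hadd Hsc]. apply Hadd; auto.
  intros w [[_ Hw]|[Hw _]].
  - destruct (Hf0pos w) as [r [_ Hr]]. rewrite Hr in Hw. discriminate.
  - pose proof (g_nonneg w). rewrite Hw in H. simpl in H. auto.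
Qed.

Lemma Escal_PInf a : 0 < a -> Escal a PInf = PInf.
Proof. intro H. unfold Escal. destruct (Rlt_dec 0 a); [reflexivity|lra]. Qed.

Lemma Aphi z : A z -> exists p r0, phi z = Fin p /\ 0 <= p /\ f0 z = Fin r0 /\ 0 < r0 /\
   alpha * p <= M * r0 /\ Ele (Fin (alpha * p)) (red F phi z).
Proof.
  intros Hz. pose proof (HA z Hz) as H. destruct (Hf0pos z) as [r0 [Hr0 E0]].
  rewrite E0 in H. pose proof (Hphi z) as Hp.
  destruct (phi z) eqn:Ep; simpl in Hp; try contradiction.
  - apply Ele_Emin in H. destruct H as [H1 H2]. simpl in H1, H2.
    exists r, r0. repeat split; auto.
  - rewrite Escal_PInf in H by lra. apply Ele_Emin in H. destruct H as [_ H]. simpl in H. contradiction.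
Qed.

Lemma gA z : exists q, (g z = PInf) \/ (g z = Fin q /\ 0 <= q).
Proof. pose proof (g_nonneg z). destruct (g z); simpl in H. exists r; right; auto. exists 0; left; auto. contradiction. Qed.

Lemma offA z : ~ A z -> forall t, 0 < t -> Ele (phi z) (h t z).
Proof.
  intros Hz t Ht. pose proof (Hg z) as H. unfold restr_compl in H.
  destruct excluded_middle_informative; [contradiction|].
  eapply Ele_trans; [apply H|]. unfold h. destruct (Hf0pos z) as [r [Hr ->]]. simpl.
  destruct (g z); simpl; auto. nra.
Qed.

Lemma base : forall z, Ele (phi z) (h M z).
Proof.
  intro z. destruct (classic (A z)) as [Hz|Hz]; [|apply offA; auto; lra].
  destruct (Aphi z Hz) as [p [r0 [E1 [Hp [E2 [Hr [H1 _]]]]]]].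
  unfold h. rewrite E1, E2. destruct (gA z) as [q [E|[E Hq]]]; rewrite E; simpl; auto. nra.
Qed.

Lemma step t : 0 < t -> (forall z, Ele (phi z) (h t z)) -> forall z, Ele (phi z) (h (t * / alpha) z).
Proof.
  intros Ht Hc z. assert (0 < /alpha) by (apply Rinv_0_lt_compat; lra).
  destruct (classic (A z)) as [Hz|Hz]; [|apply offA; auto; nra].
  destruct (Aphi z Hz) as [p [r0 [E1 [Hp [E2 [Hr [_ H1]]]]]]].
  pose proof (Ele_trans _ _ _ H1 (red_le t Ht Hc z)) as H2.
  unfold h in *. rewrite E1, E2 in *. destruct (gA z) as [q [E|[E Hq]]]; rewrite E in *; simpl in *; auto.
  apply (Rmult_le_reg_l alpha); [lra|].
  replace (alpha * (q + t * / alpha * r0)) with (alpha * q + t * r0) by (field; lra). nra.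
Qed.

Lemma iter n : forall z, Ele (phi z) (h (M * (/alpha)^n) z).
Proof.
  assert (0 < /alpha) by (apply Rinv_0_lt_compat; lra).
  induction n.
  - simpl. rewrite Rmult_1_r. apply base.
  - replace (M * (/alpha)^(S n)) with ((M * (/alpha)^n) * /alpha) by (simpl; ring).
    apply step; auto. apply Rmult_lt_0_compat; [lra|]. apply pow_lt; auto.
Qed.

Lemma final z : Ele (red F phi z) (g z).
Proof.
  assert (Hi : 0 < /alpha) by (apply Rinv_0_lt_compat; lra).
  assert (Hn : forall n, Ele (red F phi z) (h (M * (/alpha)^n) z)).
  { intro n. apply red_le; [|apply iter]. apply Rmult_lt_0_compat; [lra|]. apply pow_lt; auto. }
  destruct (gA z) as [q [E|[E Hq]]]; rewrite E; [destruct (red F phi z); simpl; auto|].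
  destruct (Hf0pos z) as [r0 [Hr E0]]. unfold h in Hn. rewrite E, E0 in Hn. simpl in Hn.
  pose proof (Hn O) as H0. destruct (red F phi z) as [c| |]; simpl in *; auto.
  apply Rnot_lt_le. intro Hlt.
  assert (Ha1 : Rabs (/alpha) < 1).
  { rewrite Rabs_right by lra. apply (Rmult_lt_reg_l alpha); [lra|]. rewrite Rinv_r; lra. }
  assert (Hy : 0 < (c - q) / (M * r0)).
  { apply Rdiv_lt_0_compat; nra. }
  destruct (pow_lt_1_zero _ Ha1 _ Hy) as [N HN].
  specialize (HN N (le_n N)). specialize (Hn N).
  rewrite Rabs_right in HN by (apply Rle_ge, pow_le; lra).
  assert (HMr : 0 < M * r0) by nra.
  assert ((/alpha)^N * (M * r0) < c - q).
  { apply (Rmult_lt_compat_r (M * r0)) in HN; auto.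
    replace ((c - q) / (M * r0) * (M * r0)) with (c - q) in HN by (field; lra). auto. }
  nra.
Qed.

End Main.

Theorem proposition3p3 (Y : Type) (F : (Y -> ER) -> Prop) (f0 : Y -> ER) :
  convex_cone F -> F f0 ->
  (forall y, exists r, 0 < r /\ f0 y = Fin r) ->
  forall (phi : Y -> ER) (A : Y -> Prop),
  (forall y, Ele (Fin 0) (phi y)) ->
  (exists alpha M : R, 1 < alpha /\ 1 < M /\
     forall y, A y ->
       Ele (Escal alpha (phi y)) (Emin (red F phi y) (Escal M (f0 y)))) ->
  forall y, red F (restr_compl phi A) y = red F phi y.
Proof.
  intros Hc Hf0 Hpos phi A Hphi [alpha [M [Ha [HM HA]]]] y.
  apply Ele_antisym.
  - destruct (Einf_spec (fun v => exists f, F f /\ (forall z, Ele (phi z) (f z)) /\ v = f y)) as [_ H2].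
    destruct (Einf_spec (fun v => exists f, F f /\ (forall z, Ele (restr_compl phi A z) (f z)) /\ v = f y)) as [H1 _].
    unfold red. apply H2. intros x [f [Ff [Hf ->]]]. apply H1. exists f. repeat split; auto.
    intro z. unfold restr_compl. destruct excluded_middle_informative; auto. eapply Ele_trans; [apply Hphi|apply Hf].
  - destruct (Einf_spec (fun v => exists f, F f /\ (forall z, Ele (restr_compl phi A z) (f z)) /\ v = f y)) as [_ H2].
    unfold red at 2. apply H2. intros x [g [Fg [Hg ->]]].
    eapply (final Y F f0 phi A) with (alpha:=alpha) (M:=M); eauto.
Qed.
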